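(* For every integer $d\ge3$, the set $\mathfrak P_d\subseteq\mathbb R^{2d-3}$ is an integral polytope (all its vertices lie in $\mathbb Z^{2d-3}$) with exactly $3^{d-2}$ vertices.
   Context: $\mathfrak P_d\subseteq\mathbb R^{2d-3}$ is the set of all $(x_1,\dots,x_{d-2},y_1,\dots,y_{d-2},z)\in\mathbb R^{2d-3}$ satisfying: $x_j-x_{j+1}\ge0$ and $y_j-y_{j+1}\ge0$ for $j\in\{1,\dots,d-3\}$; $x_j\ge0$, $y_j\ge0$ for $j\in\{1,\dots,d-2\}$; $j(z+d-1-j)+\sum_{i=0}^{j-2}x_{d-2-i}-\sum_{i=1}^{j}y_i\ge0$ for $j\in\{1,\dots,d-2\}$; and $\sum_{i=1}^{d-2}y_i-\sum_{i=1}^{d-2}x_i=z(d-1)$. A vertex of a polytope given by a system of linear inequalities is a point of it at which $2d-3$ linearly independent constraints are tight. *)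

(* Defs.v *)
(* Points of R^(2d-3) are row vectors 'rV[R]_(2d-3) over an
   arbitrary real field R (the statement specialises to the reals). *)
From HB Require Import structures.
From mathcomp Require Import all_boot all_order all_algebra.
Set Implicit Arguments. Unset Strict Implicit. Unset Printing Implicit Defensive.
Import Order.TTheory GRing.Theory Num.Theory.
Local Open Scope ring_scope.

Definition Pdim (d : nat) : nat := (2 * d - 3)%N.

Definition ecoord (R : realFieldType) (n i : nat) : 'rV[R]_n :=
  \row_(j < n) ((nat_of_ord j == i)%:R).

(* coordinate layout: (x_1..x_{d-2}, y_1..y_{d-2}, z), 1-based j for x_j, y_j *)
Definition ex (R : realFieldType) (d j : nat) : 'rV[R]_(Pdim d) :=
  ecoord R (Pdim d) (j - 1)%N.
Definition ey (R : realFieldType) (d j : nat) : 'rV[R]_(Pdim d) :=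
  ecoord R (Pdim d) (d - 2 + (j - 1))%N.
Definition ez (R : realFieldType) (d : nat) : 'rV[R]_(Pdim d) :=
  ecoord R (Pdim d) (2 * d - 4)%N.

(* A constraint is a pair (a, b) standing for the affine form  v |-> a.v + b. *)
Definition cval (R : realFieldType) (n : nat) (c : 'rV[R]_n * R) (v : 'rV[R]_n) : R :=
  \sum_(j < n) c.1 0 j * v 0 j + c.2.

(* The inequality constraints of P_d, each of the form  a.v + b >= 0 *)
Definition Pd_ineqs (R : realFieldType) (d : nat) : seq ('rV[R]_(Pdim d) * R) :=
  [seq (ex R d j - ex R d j.+1, 0) | j <- iota 1 (d - 3)]
  ++ [seq (ey R d j - ey R d j.+1, 0) | j <- iota 1 (d - 3)]
  ++ [seq (ex R d j, 0) | j <- iota 1 (d - 2)]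
  ++ [seq (ey R d j, 0) | j <- iota 1 (d - 2)]
  ++ [seq (j%:R *: ez R d
             + \sum_(0 <= i < j - 1) ex R d (d - 2 - i)
             - \sum_(1 <= i < j.+1) ey R d i,
           (j * (d - 1 - j))%:R) | j <- iota 1 (d - 2)].

Definition Pd_eq (R : realFieldType) (d : nat) : 'rV[R]_(Pdim d) * R :=
  (\sum_(1 <= i < d - 1) ey R d i - \sum_(1 <= i < d - 1) ex R d i
     - (d - 1)%:R *: ez R d, 0).

Definition in_Pd (R : realFieldType) (d : nat) (v : 'rV[R]_(Pdim d)) : Prop :=
  (forall c, c \in Pd_ineqs R d -> 0 <= cval c v) /\ cval (Pd_eq R d) v = 0.

Definition Pd_cons (R : realFieldType) (d : nat) : seq ('rV[R]_(Pdim d) * R) :=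
  Pd_ineqs R d ++ [:: Pd_eq R d].

(* v is a vertex: v in P_d and there are 2d-3 constraints of the system, tight at
   v, whose (linear parts) are linearly independent.  The constraints are chosen
   by a list I of 2d-3 indices into Pd_cons; linear independence = the matrix
   whose rows are their normal vectors is row_free. *)
Definition is_vertex_Pd (R : realFieldType) (d : nat) (v : 'rV[R]_(Pdim d)) : Prop :=
  in_Pd v /\
  exists I : seq nat,
    [/\ size I = Pdim d,
        (forall i, i \in I -> (i < size (Pd_cons R d))%N /\
                              cval (nth (0, 0) (Pd_cons R d) i) v = 0) &
        row_free (\matrix_(k < Pdim d, j < Pdim d)
                    (nth (0, 0) (Pd_cons R d) (nth 0%N I k)).1 0 j)].

(* Main.v *)
Require Import Defs.
From HB Require Import structures.
From mathcomp Require Import all_boot all_order all_algebra.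
From mathcomp Require Import zify ring lra.
Import Order.TTheory GRing.Theory Num.Theory.
Local Open Scope ring_scope.

Section Poly.
Variable R : realFieldType.
Variable d : nat.
Hypothesis hd : (3 <= d)%N.
Local Notation N := (Pdim d).
Local Notation n := (d - 2)%N.
Implicit Types v w e : 'rV[R]_N.

Definition lin (c v : 'rV[R]_N) : R := \sum_(j < N) c 0 j * v 0 j.
Definition co v i := lin (ecoord R N i) v.

Lemma cvalE c v : cval c v = lin c.1 v + c.2. Proof. by []. Qed.
Lemma linD c1 c2 v : lin (c1 + c2) v = lin c1 v + lin c2 v.
Proof. by rewrite /lin -big_split; apply eq_bigr => j _; rewrite mxE mulrDl. Qed.
Lemma linN c v : lin (- c) v = - lin c v.
Proof. by rewrite /lin -sumrN; apply eq_bigr => j _; rewrite mxE mulNr. Qed.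
Lemma linB c1 c2 v : lin (c1 - c2) v = lin c1 v - lin c2 v.
Proof. by rewrite linD linN. Qed.
Lemma linZ t c v : lin (t *: c) v = t * lin c v.
Proof. by rewrite /lin mulr_sumr; apply eq_bigr => j _; rewrite mxE mulrA. Qed.
Lemma lin0 v : lin 0 v = 0.
Proof. by rewrite /lin big1 // => j _; rewrite mxE mul0r. Qed.
Lemma lin_sum (I : Type) (r : seq I) (P : pred I) (F : I -> 'rV[R]_N) v :
  lin (\sum_(i <- r | P i) F i) v = \sum_(i <- r | P i) lin (F i) v.
Proof. by apply: (big_morph (fun c => lin c v)) => [c1 c2|]; [apply linD|apply lin0]. Qed.
Lemma linDr c v w : lin c (v + w) = lin c v + lin c w.
Proof. by rewrite /lin -big_split; apply eq_bigr => j _; rewrite mxE mulrDr. Qed.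
Lemma linZr c t v : lin c (t *: v) = t * lin c v.
Proof. by rewrite /lin mulr_sumr; apply eq_bigr => j _; rewrite mxE mulrCA. Qed.
Lemma linL c v t e : lin c (v + t *: e) = lin c v + t * lin c e.
Proof. by rewrite linDr linZr. Qed.
Lemma linr0 c : lin c 0 = 0.
Proof. by rewrite /lin big1 // => j _; rewrite mxE mulr0. Qed.

Lemma coE {i} (h : (i < N)%N) v : co v i = v 0 (Ordinal h).
Proof.
rewrite /co /lin (bigD1 (Ordinal h)) //= big1 => [|j hj]; rewrite !mxE ?eqxx ?mul1r ?addr0 //.
have -> : (nat_of_ord j == i) = false; last by rewrite mul0r.
by apply/negP => /eqP hji; move: hj; rewrite -(inj_eq val_inj) /= hji eqxx.
Qed.
Lemma co_out i v : (N <= i)%N -> co v i = 0.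
Proof.
move=> hi; rewrite /co /lin big1 // => j _; rewrite !mxE.
have -> : (nat_of_ord j == i) = false; last by rewrite mul0r.
by apply/negP => /eqP hji; move: (ltn_ord j); rewrite hji ltnNge hi.
Qed.
Lemma coL v t e i : co (v + t *: e) i = co v i + t * co e i.
Proof. exact: linL. Qed.
Lemma co0 i : co 0 i = 0.
Proof. exact: linr0. Qed.


Definition X v k := if (0 < k <= n)%N then co v (k - 1) else 0.
Definition Y v k := if (0 < k <= n)%N then co v (d - 2 + (k - 1)) else 0.
Definition Z v := co v (2 * d - 4).
Definition a v j := X v (d - 1 - j) - X v (d - j).
Definition b v j := Y v j - Y v j.+1.
Definition Slin v j := j%:R * Z v + \sum_(0 <= i < j - 1) X v (d - 2 - i)
   - \sum_(1 <= i < j.+1) Y v i.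
Definition Cq j : R := (j * (d - 1 - j))%:R.
Definition S v j := Slin v j + Cq j.

Lemma XL v t e k : X (v + t *: e) k = X v k + t * X e k.
Proof. by rewrite /X; case: ifP => _; rewrite ?coL // mulr0 addr0. Qed.
Lemma YL v t e k : Y (v + t *: e) k = Y v k + t * Y e k.
Proof. by rewrite /Y; case: ifP => _; rewrite ?coL // mulr0 addr0. Qed.
Lemma ZL v t e : Z (v + t *: e) = Z v + t * Z e.
Proof. exact: coL. Qed.
Lemma aL v t e j : a (v + t *: e) j = a v j + t * a e j.
Proof. by rewrite /a !XL; ring. Qed.
Lemma bL v t e j : b (v + t *: e) j = b v j + t * b e j.
Proof. by rewrite /b !YL; ring. Qed.
Lemma SlinL v t e j : Slin (v + t *: e) j = Slin v j + t * Slin e j.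
Proof.
rewrite /Slin ZL.
under eq_bigr do rewrite XL.
under [X in _ - X = _]eq_bigr do rewrite YL.
rewrite !big_split /= -!mulr_sumr; ring.
Qed.
Lemma SL v t e j : S (v + t *: e) j = S v j + t * Slin e j.
Proof. by rewrite /S SlinL; ring. Qed.

Lemma X_out v k : (n < k)%N -> X v k = 0.
Proof. by move=> h; rewrite /X; case: ifP => //; lia. Qed.
Lemma Y_out v k : (n < k)%N -> Y v k = 0.
Proof. by move=> h; rewrite /Y; case: ifP => //; lia. Qed.

Lemma Slin0 v : Slin v 0 = 0.
Proof. by rewrite /Slin !big_geq // mul0r; ring. Qed.
Lemma S0 v : S v 0 = 0.
Proof. by rewrite /S Slin0 /Cq mul0n add0r. Qed.

Lemma SlinD0 v : Slin v 1 - Slin v 0 = Z v - Y v 1.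
Proof.
rewrite /Slin subnn sub0n (big_geq (m:=0%N)) //.
rewrite (big_geq (m:=1%N) (n:=1%N)) // big_nat1 mul1r mul0r; ring.
Qed.
Lemma SlinD v k : Slin v k.+2 - Slin v k.+1 = Z v + X v (d - 2 - k) - Y v k.+2.
Proof.
rewrite /Slin !subSS !subn0 big_nat_recr //= (big_nat_recr k.+2) //=.
rewrite -[_.+2%:R]natr1; ring.
Qed.

Lemma Cq2 k : (k.+1 <= n)%N -> Cq k.+2 - 2%:R * Cq k.+1 + Cq k = - 2%:R.
Proof.
move=> hk; rewrite /Cq.
have e : ((k.+2 * (d - 1 - k.+2)) + (k * (d - 1 - k)) + 2 = 2 * (k.+1 * (d - 1 - k.+1)))%N.
  have [m ->] : exists m, d = (k + 3 + m)%N by exists (d - (k + 3))%N; lia.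
  have -> : (k + 3 + m - 1 - k.+2 = m)%N by lia.
  have -> : (k + 3 + m - 1 - k = m + 2)%N by lia.
  have -> : (k + 3 + m - 1 - k.+1 = m + 1)%N by lia.
  nia.
have e' : (k.+2 * (d - 1 - k.+2))%:R + (k * (d - 1 - k))%:R + 2%:R =
  2%:R * (k.+1 * (d - 1 - k.+1))%:R :> R by rewrite -!natrD -natrM e.
lra.
Qed.

Lemma Slin2 v k : (k.+1 <= n)%N ->
  Slin v k.+2 - 2%:R * Slin v k.+1 + Slin v k = a v k.+1 + b v k.+1.
Proof.
move=> hk.
have E : Slin v k.+2 - 2%:R * Slin v k.+1 + Slin v k =
   (Slin v k.+2 - Slin v k.+1) - (Slin v k.+1 - Slin v k) by ring.
rewrite E SlinD /a /b.
case: k hk E => [|k] hk _.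
  rewrite SlinD0 (@X_out v (d - 0.+1)%N); last by lia.
  rewrite subn0 (_ : (d - 1 - 1 = d - 2)%N); [ring|lia].
rewrite SlinD.
have -> : (d - 1 - k.+2 = d - 2 - k.+1)%N by lia.
have -> : (d - k.+2 = d - 2 - k)%N by lia.
ring.
Qed.

Lemma S2 v k : (k.+1 <= n)%N ->
  S v k.+2 - 2%:R * S v k.+1 + S v k = a v k.+1 + b v k.+1 - 2%:R.
Proof.
move=> hk; rewrite /S.
have E : Slin v k.+2 + Cq k.+2 - 2%:R * (Slin v k.+1 + Cq k.+1) + (Slin v k + Cq k)
  = (Slin v k.+2 - 2%:R * Slin v k.+1 + Slin v k) + (Cq k.+2 - 2%:R * Cq k.+1 + Cq k) by ring.
by rewrite E Slin2 // Cq2.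
Qed.


Lemma lin_ex j v : (0 < j <= n)%N -> lin (ex R d j) v = X v j.
Proof. by move=> h; rewrite /X h. Qed.
Lemma lin_ey j v : (0 < j <= n)%N -> lin (ey R d j) v = Y v j.
Proof. by move=> h; rewrite /Y h. Qed.
Lemma lin_ez v : lin (ez R d) v = Z v.
Proof. by []. Qed.

Lemma sum_rev (F : nat -> R) m :
  \sum_(0 <= i < m) F (m - i)%N = \sum_(1 <= i < m.+1) F i.
Proof.
elim: m => [|m IH]; first by rewrite !big_geq.
rewrite big_nat_recl // subn0 (big_nat_recr m.+1) //= -IH addrC.
by congr (_ + _); apply: eq_bigr => i _; rewrite subSS.
Qed.

Lemma cval_L j v : (0 < j <= n)%N ->
  cval (j%:R *: ez R d + \sum_(0 <= i < j - 1) ex R d (d - 2 - i)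
             - \sum_(1 <= i < j.+1) ey R d i, (j * (d - 1 - j))%:R) v = S v j.
Proof.
move=> hj; rewrite cvalE /= linB linD linZ !lin_sum lin_ez /S /Slin /Cq.
congr (_ + _ - _ + _).
  apply: eq_big_nat => i hi; apply: lin_ex; lia.
apply: eq_big_nat => i hi; apply: lin_ey; lia.
Qed.

Lemma cval_eq v : cval (Pd_eq R d) v = - S v (d - 1).
Proof.
rewrite cvalE /Pd_eq /= linB linB !lin_sum linZ lin_ez addr0 /S /Slin /Cq subnn muln0 addr0.
have e1 : (d - 1 - 1 = n)%N by lia.
have e2 : (d - 1 = n.+1)%N by lia.
rewrite e1 sum_rev -e2.
rewrite (big_nat_recr (d - 1)) /=; last by lia.
rewrite Y_out ?addr0; last by lia.
have -> : \sum_(1 <= i < d - 1) lin (ey R d i) v = \sum_(1 <= i < d - 1) Y v i.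
  apply: eq_big_nat => i hi; apply: lin_ey; lia.
have -> : \sum_(1 <= i < d - 1) lin (ex R d i) v = \sum_(1 <= i < d - 1) X v i.
  apply: eq_big_nat => i hi; apply: lin_ex; lia.
ring.
Qed.

Definition Pc v := (forall j, (0 < j <= n)%N -> 0 <= a v j /\ 0 <= b v j /\ 0 <= S v j)
   /\ S v (d - 1) = 0.

Lemma X_ge0 v : (forall j, (0 < j <= n)%N -> 0 <= a v j) -> forall k, 0 <= X v k.
Proof.
move=> ha.
have step : forall k, (0 < k <= n)%N -> X v k.+1 <= X v k.
  move=> k hk; have := ha (d - 1 - k)%N; rewrite /a.
  have -> : (d - 1 - (d - 1 - k) = k)%N by lia.
  have -> : (d - (d - 1 - k) = k.+1)%N by lia.
  by rewrite subr_ge0; apply; lia.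
suff H : forall m k, (n < k + m)%N -> 0 <= X v k.
  by move=> k; apply: (H n.+1); lia.
elim=> [|m IH] k hk; first by rewrite X_out //; lia.
case: k hk => [|k] hk; first by rewrite /X.
case: (ltnP n k.+1) => hk'; first by rewrite X_out.
apply: le_trans (step _ _); last by lia.
by apply: IH; lia.
Qed.

Lemma Y_ge0 v : (forall j, (0 < j <= n)%N -> 0 <= b v j) -> forall k, 0 <= Y v k.
Proof.
move=> hb.
have step : forall k, (0 < k <= n)%N -> Y v k.+1 <= Y v k.
  by move=> k hk; have := hb k hk; rewrite /b subr_ge0.
suff H : forall m k, (n < k + m)%N -> 0 <= Y v k.
  by move=> k; apply: (H n.+1); lia.
elim=> [|m IH] k hk; first by rewrite Y_out //; lia.
case: k hk => [|k] hk; first by rewrite /Y.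
case: (ltnP n k.+1) => hk'; first by rewrite Y_out.
apply: le_trans (step _ _); last by lia.
by apply: IH; lia.
Qed.


Lemma in_PdE v : in_Pd v <-> Pc v.
Proof.
split.
  case=> H He; split; last by move: He; rewrite cval_eq => /eqP; rewrite oppr_eq0 => /eqP.
  move=> j hj; split; [|split].
  - case: (ltnP 1 j) => h1.
      have := H (ex R d (d - 1 - j) - ex R d (d - 1 - j).+1, 0).
      rewrite cvalE /= linB !lin_ex; try lia.
      rewrite addr0 /a (_ : (d - j = (d - 1 - j).+1)%N); last by lia.
      apply; rewrite /Pd_ineqs mem_cat; apply/orP; left.
      apply/mapP; exists (d - 1 - j)%N => //; rewrite mem_iota; lia.
    have -> : j = 1%N by lia.
    have := H (ex R d (d - 2), 0).
    rewrite cvalE /= lin_ex; last by lia.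
    rewrite addr0 /a [X v (d - 1)]X_out; last by lia.
    rewrite subr0 (_ : (d - 1 - 1 = d - 2)%N); last by lia.
    apply; rewrite /Pd_ineqs !mem_cat; apply/orP; right; apply/orP; right.
    apply/orP; left; apply/mapP; exists (d - 2)%N => //; rewrite mem_iota; lia.
  - case: (ltnP j n) => h1.
      have := H (ey R d j - ey R d j.+1, 0).
      rewrite cvalE /= linB !lin_ey; try lia.
      rewrite addr0 /b; apply; rewrite /Pd_ineqs !mem_cat; apply/orP; right; apply/orP; left.
      apply/mapP; exists j => //; rewrite mem_iota; lia.
    have := H (ey R d j, 0).
    rewrite cvalE /= lin_ey; last by lia.
    rewrite addr0 /b [Y v j.+1]Y_out; last by lia.
    rewrite subr0; apply; rewrite /Pd_ineqs !mem_cat; apply/orP; right; apply/orP; right.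
    apply/orP; right; apply/orP; left; apply/mapP; exists j => //; rewrite mem_iota; lia.
  - rewrite -cval_L //; apply: H.
    rewrite /Pd_ineqs !mem_cat; apply/orP; right; apply/orP; right.
    apply/orP; right; apply/orP; right; apply/mapP; exists j => //; rewrite mem_iota; lia.
case=> H He; split; last by rewrite cval_eq He oppr0.
have ha : forall j, (0 < j <= n)%N -> 0 <= a v j by move=> j /H [].
have hb : forall j, (0 < j <= n)%N -> 0 <= b v j by move=> j /H [_ []].
move=> c; rewrite /Pd_ineqs !mem_cat.
case/orP => [/mapP [k hk ->]|].
  move: hk; rewrite mem_iota => hk.
  rewrite cvalE /= linB !lin_ex; try lia.
  have := ha (d - 1 - k)%N; rewrite /a.
  have -> : (d - 1 - (d - 1 - k) = k)%N by lia.
  have -> : (d - (d - 1 - k) = k.+1)%N by lia.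
  by rewrite addr0; apply; lia.
case/orP => [/mapP [k hk ->]|].
  move: hk; rewrite mem_iota => hk.
  rewrite cvalE /= linB !lin_ey; try lia.
  by rewrite addr0; apply: hb; lia.
case/orP => [/mapP [k hk ->]|].
  move: hk; rewrite mem_iota => hk.
  by rewrite cvalE /= addr0 lin_ex; [apply: X_ge0 | lia].
case/orP => [/mapP [k hk ->]|].
  move: hk; rewrite mem_iota => hk.
  by rewrite cvalE /= addr0 lin_ey; [apply: Y_ge0 | lia].
case/mapP => k hk ->.
move: hk; rewrite mem_iota => hk.
rewrite cval_L; last by lia.
by have [_ [_ ]] := H k ltac:(lia).
Qed.


Lemma dir_uniq (f : nat -> R) : f 0%N = 0 -> f (d - 1)%N = 0 ->
  (forall k, (k.+1 <= n)%N -> f k.+1 = 0 \/ f k.+2 - 2%:R * f k.+1 + f k = 0) ->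
  forall j, (j <= d - 1)%N -> f j = 0.
Proof.
move=> f0 fe frel j hj; apply/eqP; apply/negPn/negP => hfj.
have ex : exists j, (j <= d - 1)%N && (f j != 0) by exists j; rewrite hj hfj.
case: (ex_minnP ex) => j0 /andP [hj0 hf] hmin.
case: j0 hj0 hf hmin => [|k0] hj0 hf hmin; first by rewrite f0 eqxx in hf.
have fk0 : f k0 = 0.
  apply/eqP; apply/negPn/negP => h.
  have := hmin k0; rewrite h andbT; have -> : (k0 <= d - 1)%N by lia.
  by move=> /(_ isT); lia.
set c := f k0.+1.
have claim : forall m, (k0.+1 + m <= d - 1)%N ->
    f (k0.+1 + m)%N = (m.+1)%:R * c /\ f (k0 + m)%N = m%:R * c.
  elim=> [|m IH] hm; first by rewrite !addn0 mul1r mul0r.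
  have [IH1 IH2] := IH ltac:(lia).
  have hne : f (k0 + m).+1 != 0.
    rewrite -addSn IH1 mulf_neq0 //; first by rewrite pnatr_eq0.
  have [h|h] := frel (k0 + m)%N ltac:(lia).
    by rewrite h eqxx in hne.
  split; last by rewrite addnS -addSn IH1.
  have -> : (k0.+1 + m.+1 = (k0 + m).+2)%N by lia.
  apply/eqP; rewrite -subr_eq0; apply/eqP; rewrite -h -addSn IH1 IH2 -!natr1; ring.
have [h1 _] := claim (d - 1 - k0.+1)%N ltac:(lia).
move: h1; rewrite (_ : (k0.+1 + (d - 1 - k0.+1) = d - 1)%N); last by lia.
rewrite fe => /esym /eqP; rewrite mulf_eq0 pnatr_eq0 /= => /eqP hc.
by rewrite -/c hc eqxx in hf.
Qed.


Definition mk (x y : nat -> R) (z : R) : 'rV[R]_N :=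
  \row_(j < N) (if (j < n)%N then x j.+1 else if (j < 2 * d - 4)%N then y (j - n).+1 else z).

Lemma X_mk x y z k : X (mk x y z) k = if (0 < k <= n)%N then x k else 0.
Proof.
rewrite /X; case: ifP => h //.
have hi : (k - 1 < N)%N by rewrite /Pdim; lia.
rewrite (coE hi) mxE /=; case: ifP => h2; last by lia.
by congr x; lia.
Qed.
Lemma Y_mk x y z k : Y (mk x y z) k = if (0 < k <= n)%N then y k else 0.
Proof.
rewrite /Y; case: ifP => h //.
have hi : (d - 2 + (k - 1) < N)%N by rewrite /Pdim; lia.
rewrite (coE hi) mxE /=; case: ifP => h2; first by lia.
case: ifP => h3; last by lia.
by congr y; lia.
Qed.
Lemma Z_mk x y z : Z (mk x y z) = z.
Proof.
rewrite /Z.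
have hi : (2 * d - 4 < N)%N by rewrite /Pdim; lia.
rewrite (coE hi) mxE /=; case: ifP => h2; first by lia.
by case: ifP => h3; first by lia.
Qed.

Lemma vec_eq v w : (forall k, (0 < k <= n)%N -> X v k = X w k) ->
  (forall k, (0 < k <= n)%N -> Y v k = Y w k) -> Z v = Z w -> v = w.
Proof.
move=> hX hY hZ; apply/rowP => j.
have hc : forall u : 'rV[R]_N, u 0 j = co u j.
  by move=> u; rewrite (coE (ltn_ord j)); congr (u 0 _); apply: val_inj.
rewrite !hc.
case: (ltnP j n) => h1.
  have := hX j.+1 ltac:(lia); rewrite /X.
  by case: ifP => hh; [rewrite subn1 | lia].
case: (ltnP j (2 * d - 4)) => h2.
  have := hY (j - n).+1 ltac:(lia); rewrite /Y.
  case: ifP => hh; last by lia.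
  by rewrite (_ : (d - 2 + ((j - n).+1 - 1) = j)%N); last by lia.
have h3 : (j < 2 * d - 3)%N := ltn_ord j.
have e : (nat_of_ord j = 2 * d - 4)%N by lia.
by rewrite e.
Qed.

Lemma cval_eq' v : cval (Pd_eq R d) v =
  \sum_(1 <= i < d - 1) Y v i - \sum_(1 <= i < d - 1) X v i - (d - 1)%:R * Z v.
Proof.
rewrite cvalE /Pd_eq /= linB linB !lin_sum linZ lin_ez addr0.
have -> : \sum_(1 <= i < d - 1) lin (ey R d i) v = \sum_(1 <= i < d - 1) Y v i.
  apply: eq_big_nat => i hi; apply: lin_ey; lia.
have -> : \sum_(1 <= i < d - 1) lin (ex R d i) v = \sum_(1 <= i < d - 1) X v i.
  apply: eq_big_nat => i hi; apply: lin_ex; lia.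
by [].
Qed.

Lemma Slin_end v : Slin v (d - 1) =
  (d - 1)%:R * Z v + \sum_(1 <= i < d - 1) X v i - \sum_(1 <= i < d - 1) Y v i.
Proof.
have := cval_eq v; rewrite cval_eq' /S /Cq subnn muln0 addr0 => h.
apply/eqP; rewrite -subr_eq0; apply/eqP.
have -> : Slin v (d - 1) = - (- Slin v (d - 1)) by rewrite opprK.
rewrite -h; ring.
Qed.

Definition Xb (A : nat -> R) k := \sum_(k <= i < d - 1) A (d - 1 - i)%N.
Definition Yb (B : nat -> R) k := \sum_(k <= i < d - 1) B i.
Definition Zb A B := (\sum_(1 <= i < d - 1) Yb B i - \sum_(1 <= i < d - 1) Xb A i) / (d - 1)%:R.
Definition build A B := mk (Xb A) (Yb B) (Zb A B).

Lemma X_build A B k : (0 < k)%N -> X (build A B) k = Xb A k.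
Proof.
move=> hk; rewrite X_mk; case: ifP => h //.
by rewrite /Xb big_geq //; lia.
Qed.
Lemma Y_build A B k : (0 < k)%N -> Y (build A B) k = Yb B k.
Proof.
move=> hk; rewrite Y_mk; case: ifP => h //.
by rewrite /Yb big_geq //; lia.
Qed.

Lemma a_build A B j : (0 < j <= n)%N -> a (build A B) j = A j.
Proof.
move=> hj; rewrite /a !X_build; try lia.
rewrite /Xb (big_ltn (m := (d - 1 - j)%N)); last by lia.
rewrite (_ : (d - 1 - j).+1 = d - j)%N; last by lia.
rewrite (_ : (d - 1 - (d - 1 - j) = j)%N); last by lia.
ring.
Qed.
Lemma b_build A B j : (0 < j <= n)%N -> b (build A B) j = B j.
Proof.
move=> hj; rewrite /b !Y_build; try lia.
rewrite /Yb (big_ltn (m := j)); last by lia.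
ring.
Qed.

Lemma Slin_build_end A B : Slin (build A B) (d - 1) = 0.
Proof.
rewrite Slin_end Z_mk.
rewrite (eq_big_nat _ _ (F2 := Xb A)); last by move=> i hi; apply: X_build; lia.
rewrite (eq_big_nat _ _ (F1 := Y _) (F2 := Yb B)); last by move=> i hi; apply: Y_build; lia.
rewrite /Zb mulrC divfK; first ring.
rewrite pnatr_eq0; lia.
Qed.

Lemma S_det v (s : nat -> R) : S v (d - 1) = 0 -> s 0%N = 0 -> s (d - 1)%N = 0 ->
  (forall k, (k.+1 <= n)%N -> s k.+2 - 2%:R * s k.+1 + s k = a v k.+1 + b v k.+1 - 2%:R) ->
  forall j, (j <= d - 1)%N -> S v j = s j.
Proof.
move=> hv s0 se hs j hj; apply/eqP; rewrite -subr_eq0; apply/eqP.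
apply: (@dir_uniq (fun j => S v j - s j)) => //.
- by rewrite S0 s0 subr0.
- by rewrite hv se subr0.
- move=> k hk; right.
  have -> : S v k.+2 - s k.+2 - 2%:R * (S v k.+1 - s k.+1) + (S v k - s k) =
   (S v k.+2 - 2%:R * S v k.+1 + S v k) - (s k.+2 - 2%:R * s k.+1 + s k) by ring.
  by rewrite S2 // hs // subrr.
Qed.

Lemma Slin_det e (s : nat -> R) : Slin e (d - 1) = 0 -> s 0%N = 0 -> s (d - 1)%N = 0 ->
  (forall k, (k.+1 <= n)%N -> s k.+2 - 2%:R * s k.+1 + s k = a e k.+1 + b e k.+1) ->
  forall j, (j <= d - 1)%N -> Slin e j = s j.
Proof.
move=> hv s0 se hs j hj; apply/eqP; rewrite -subr_eq0; apply/eqP.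
apply: (@dir_uniq (fun j => Slin e j - s j)) => //.
- by rewrite Slin0 s0 subr0.
- by rewrite hv se subr0.
- move=> k hk; right.
  have -> : Slin e k.+2 - s k.+2 - 2%:R * (Slin e k.+1 - s k.+1) + (Slin e k - s k) =
   (Slin e k.+2 - 2%:R * Slin e k.+1 + Slin e k) - (s k.+2 - 2%:R * s k.+1 + s k) by ring.
  by rewrite Slin2 // hs // subrr.
Qed.


Lemma eps_list (l : seq (R * R)) :
  (forall p, p \in l -> 0 <= p.1 /\ (p.1 = 0 -> p.2 = 0)) ->
  exists eps, 0 < eps /\ forall p, p \in l -> 0 <= p.1 + eps * p.2 /\ 0 <= p.1 - eps * p.2.
Proof.
elim: l => [|[f g] l IH] H; first by exists 1; split => // p; rewrite in_nil.
have [e0 [he0 He0]] : exists eps, 0 < eps /\ forall p, p \in l ->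
    0 <= p.1 + eps * p.2 /\ 0 <= p.1 - eps * p.2.
  by apply: IH => p hp; apply: H; rewrite in_cons hp orbT.
have [hf hfg] := H (f, g) (mem_head _ _).
have mono : forall eps, 0 < eps -> eps <= e0 -> forall p, p \in l ->
    0 <= p.1 + eps * p.2 /\ 0 <= p.1 - eps * p.2.
  move=> eps h1 h2 p hp; have [h3 h4] := He0 p hp.
  have [h5 _] := H p ltac:(by rewrite in_cons hp orbT).
  by split; nra.
have [f0|fpos] := eqVneq f 0.
  exists e0; split => // p; rewrite in_cons => /orP [/eqP ->|hp]; last exact: He0.
  by move: hfg; rewrite /= f0 => -> //; rewrite mulr0 add0r subr0.
have fgt : 0 < f by rewrite lt_def fpos hf.
have hq : 0 < f / (`|g| + 1) by apply: divr_gt0 => //; apply: ltr_wpDl.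
exists (Order.min e0 (f / (`|g| + 1))); split; first by rewrite lt_min he0 hq.
set eps := Order.min _ _.
have heps : 0 < eps by rewrite lt_min he0 hq.
move=> p; rewrite in_cons => /orP [/eqP ->|hp]; last by apply: mono => //; rewrite ge_min lexx.
have h1 : eps * (`|g| + 1) <= f.
  by rewrite -ler_pdivlMr ?ltr_wpDl // ge_min lexx orbT.
have h2 : eps * g <= eps * `|g| by apply: ler_wpM2l; [apply: ltW | apply: ler_norm].
have h3 : - (eps * `|g|) <= eps * g.
  by rewrite -mulrN; apply: ler_wpM2l; [apply: ltW | rewrite lerNl -normrN; apply: ler_norm].
simpl; split; nra.
Qed.


Lemma perturb v e : Pc v -> Slin e (d - 1) = 0 ->
  (forall j, (0 < j <= n)%N -> (a v j = 0 -> a e j = 0) /\ (b v j = 0 -> b e j = 0)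
       /\ (S v j = 0 -> Slin e j = 0)) ->
  exists eps, 0 < eps /\ Pc (v + eps *: e) /\ Pc (v + (- eps) *: e).
Proof.
move=> [Hv Hve] He Hz.
pose l := [seq (a v j, a e j) | j <- iota 1 n] ++ [seq (b v j, b e j) | j <- iota 1 n]
   ++ [seq (S v j, Slin e j) | j <- iota 1 n].
have [eps [heps H]] : exists eps, 0 < eps /\ forall p, p \in l ->
    0 <= p.1 + eps * p.2 /\ 0 <= p.1 - eps * p.2.
  apply: eps_list => p; rewrite !mem_cat => /orP [|/orP []] /mapP [j hj ->] /=;
    move: hj; rewrite mem_iota => hj; have [h1 [h2 h3]] := Hz j ltac:(lia);
    have [h4 [h5 h6]] := Hv j ltac:(lia); by split.
exists eps; split => //.
have hm : forall j, (0 < j <= n)%N -> j \in iota 1 n by move=> j hj; rewrite mem_iota; lia.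
split; split; try by rewrite SL Hve He mulr0 addr0.
- move=> j hj; rewrite aL bL SL.
  have [h1 _] := H (a v j, a e j) ltac:(by rewrite mem_cat map_f ?hm).
  have [h2 _] := H (b v j, b e j) ltac:(by rewrite !mem_cat map_f ?hm ?orbT).
  have [h3 _] := H (S v j, Slin e j) ltac:(by rewrite !mem_cat map_f ?hm ?orbT).
  by [].
- move=> j hj; rewrite aL bL SL !mulNr.
  have [_ h1] := H (a v j, a e j) ltac:(by rewrite mem_cat map_f ?hm).
  have [_ h2] := H (b v j, b e j) ltac:(by rewrite !mem_cat map_f ?hm ?orbT).
  have [_ h3] := H (S v j, Slin e j) ltac:(by rewrite !mem_cat map_f ?hm ?orbT).
  by [].
Qed.

Definition extreme v := in_Pd v /\
  forall p q, in_Pd p -> in_Pd q -> p + q = v + v -> p = v.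

Lemma no_perturb v e : extreme v -> Slin e (d - 1) = 0 ->
  (forall j, (0 < j <= n)%N -> (a v j = 0 -> a e j = 0) /\ (b v j = 0 -> b e j = 0)
       /\ (S v j = 0 -> Slin e j = 0)) -> e = 0.
Proof.
move=> [hv hext] He Hz.
have [eps [heps [h1 h2]]] := @perturb v e (proj1 (in_PdE v) hv) He Hz.
have := hext _ _ (proj2 (in_PdE _) h1) (proj2 (in_PdE _) h2).
rewrite addrACA -scalerDl subrr scale0r addr0 => /(_ erefl).
move/eqP; rewrite -subr_eq0 addrAC subrr add0r scaler_eq0 => /orP [|/eqP //].
by rewrite gt_eqF.
Qed.

Lemma a0 j : a 0 j = 0.
Proof. by rewrite /a /X !co0; case: ifP; case: ifP => _ _; rewrite subrr. Qed.
Lemma b0 j : b 0 j = 0.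
Proof. by rewrite /b /Y !co0; case: ifP; case: ifP => _ _; rewrite subrr. Qed.
Lemma Slin0v j : Slin 0 j = 0.
Proof.
rewrite /Slin /Z co0 mulr0 add0r big1 ?big1 ?subrr // => i _;
  by rewrite ?/X ?/Y co0; case: ifP.
Qed.

Lemma ext_ab v j : extreme v -> (0 < j <= n)%N -> a v j = 0 \/ b v j = 0.
Proof.
move=> hv hj; case: (eqVneq (a v j) 0) => [|ha]; first by left.
case: (eqVneq (b v j) 0) => [|hb]; first by right.
pose e := build (fun i => if i == j then 1 else 0) (fun i => if i == j then -1 else 0).
have hS : forall i, (i <= d - 1)%N -> Slin e i = 0.
  apply: (@Slin_det e (fun _ => 0)) => //; first exact: Slin_build_end.
  move=> k hk; rewrite a_build; last by lia.
  rewrite b_build; last by lia.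
  by case: ifP => _; rewrite ?subrr ?addr0 ?mulr0 ?subr0.
have : e = 0.
  apply: (@no_perturb v e hv); first exact: Slin_build_end.
  move=> i hi; split; [|split]; last by move=> _; apply: hS; lia.
    rewrite a_build //; case: eqP => // -> h; by rewrite h eqxx in ha.
  rewrite b_build //; case: eqP => // -> h; by rewrite h eqxx in hb.
move=> he; have := @a_build (fun i => if i == j then 1 else 0)
   (fun i => if i == j then -1 else 0) j hj.
rewrite -/e he a0 eqxx => /eqP; by rewrite eq_sym oner_eq0.
Qed.


Lemma Pc_S_ge0 v : Pc v -> forall i, (i <= d - 1)%N -> 0 <= S v i.
Proof.
move=> [H He] i hi.
case: i hi => [|i] hi; first by rewrite S0.
case: (ltnP i.+1 (d - 1)) => h; first by have [_ [_]] := H i.+1 ltac:(lia).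
by rewrite (_ : i.+1 = d - 1)%N ?He //; lia.
Qed.

Lemma Pc_t_pos v i : Pc v -> (0 < i <= n)%N -> S v i = 0 -> 2%:R <= a v i + b v i.
Proof.
move=> hP hi hS.
case: i hi hS => [|k] hi hS; first by lia.
have := @S2 v k ltac:(lia); rewrite hS mulr0 subr0.
have h1 := @Pc_S_ge0 v hP k.+2 ltac:(lia).
have h2 := @Pc_S_ge0 v hP k ltac:(lia).
lra.
Qed.


Lemma ext_st v j : extreme v -> (0 < j <= n)%N -> S v j = 0 \/ (a v j = 0 /\ b v j = 0).
Proof.
move=> hv hj.
have hP : Pc v by apply/in_PdE; case: hv.
case: (eqVneq (S v j) 0) => [|hSj]; first by left.
right.
have [ha hb] : 0 <= a v j /\ 0 <= b v j by have [h1 [h2 _]] := hP.1 j hj.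
have [[haj hbj]|htj] : (a v j = 0 /\ b v j = 0) \/ a v j + b v j != 0.
  case: (eqVneq (a v j) 0) => haj; case: (eqVneq (b v j) 0) => hbj.
  - by left.
  - by right; rewrite haj add0r.
  - by right; rewrite hbj addr0.
  - right; have hbp : 0 < b v j by rewrite lt_def hbj hb.
    rewrite gt_eqF //; lra.
  by [].
exfalso.
all: clear ha hb.
have exP : exists i, (i < j)%N && (S v i == 0) by exists 0%N; rewrite S0 eqxx; lia.
have exQ : exists i, (j < i <= d - 1)%N && (S v i == 0).
  by exists (d - 1)%N; rewrite hP.2 eqxx andbT; lia.
have bP : forall i, (i < j)%N && (S v i == 0) -> (i <= j)%N by move=> i /andP [h _]; lia.
case: (ex_maxnP exP bP) => P0 /andP [hP0 /eqP SP0] maxP.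
case: (ex_minnP exQ) => Q0 /andP [hQ0 /eqP SQ0] minQ.
have Spos : forall i, (P0 < i < Q0)%N -> S v i != 0.
  move=> i hi; case: (ltngtP i j) => hij.
  - apply/negP => /eqP h; have := maxP i; rewrite h eqxx andbT hij => /(_ isT); lia.
  - apply/negP => /eqP h; have := minQ i; rewrite h eqxx andbT.
    have -> : (j < i <= d - 1)%N by lia.
    by move=> /(_ isT); lia.
  - by rewrite hij.
pose tent (i : nat) : R := if (i <= P0)%N then 0 else if (i <= j)%N then
   (i%:R - P0%:R) * (Q0%:R - j%:R) else if (i <= Q0)%N then
   (Q0%:R - i%:R) * (j%:R - P0%:R) else 0.
have tL : forall i, (P0 <= i <= j)%N -> tent i = (i%:R - P0%:R) * (Q0%:R - j%:R).
  move=> i hi; rewrite /tent; case: ifP => h1.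
    by rewrite (_ : i = P0); [rewrite subrr mul0r | lia].
  by case: ifP => h2 //; lia.
have tR : forall i, (j <= i <= Q0)%N -> tent i = (Q0%:R - i%:R) * (j%:R - P0%:R).
  move=> i hi; rewrite /tent; case: ifP => h1; first by lia.
  case: ifP => h2; last by case: ifP => h3 //; lia.
  by rewrite (_ : i = j); [rewrite mulrC | lia].
have tO : forall i, (i <= P0)%N || (Q0 <= i)%N -> tent i = 0.
  move=> i hi; rewrite /tent; case: ifP => h1 //.
  case: ifP => h2; first by lia.
  case: ifP => h3 //.
  by rewrite (_ : i = Q0); [rewrite subrr mul0r | lia].
pose dt (i : nat) : R := tent i.+1 - 2%:R * tent i + tent i.-1.
have flat : forall i, (0 < i <= n)%N -> S v i != 0 -> i != j -> dt i = 0.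
  move=> i hi hSi hij; rewrite /dt.
  have hiP : i != P0 by apply: contraNneq hSi => ->; rewrite SP0.
  have hiQ : i != Q0 by apply: contraNneq hSi => ->; rewrite SQ0.
  case: i hi hSi hij hiP hiQ => [|i] hi hSi hij hiP hiQ; first by lia.
  rewrite succnK.
  case: (ltnP i.+1 P0) => h1.
    rewrite (tO i.+2) ?(tO i.+1) ?(tO i) ?mulr0 ?subrr ?addr0 //; apply/orP; left; lia.
  case: (ltnP i.+1 j) => h2.
    rewrite !tL; try lia.
    rewrite -!natr1; ring.
  case: (ltnP i.+1 Q0) => h3.
    rewrite !tR; try lia.
    rewrite -!natr1; ring.
  rewrite (tO i.+2) ?(tO i.+1) ?(tO i) ?mulr0 ?subrr ?addr0 //; apply/orP; right; lia.
pose A (i : nat) := if a v i != 0 then dt i else 0.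
pose B (i : nat) := if a v i != 0 then 0 else dt i.
pose e := build A B.
have hSe : forall i, (i <= d - 1)%N -> Slin e i = tent i.
  apply: Slin_det.
  - exact: Slin_build_end.
  - by apply: tO; apply/orP; left.
  - by apply: tO; apply/orP; right; lia.
  - move=> k hk; rewrite a_build; last by lia.
    rewrite b_build; last by lia.
    by rewrite /A /B /dt; case: ifP => _; rewrite ?addr0 ?add0r.
have : e = 0.
  apply: (@no_perturb v e hv); first exact: Slin_build_end.
  move=> i hi; split; [|split].
  - by rewrite a_build // /A => ->; rewrite eqxx.
  - rewrite b_build // /B; case: ifP => // /negbFE /eqP hai hbi.
    apply: flat => //.
      apply/negP => /eqP hSi; have := @Pc_t_pos v i hP hi hSi; rewrite hai hbi addr0.
      lra.
    by apply/negP => /eqP hij; move: htj; rewrite -hij hai hbi addr0 eqxx.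
  - move=> hSi; rewrite hSe; last by lia.
    apply: tO; case: (leqP i P0) => //= h1.
    case: (leqP Q0 i) => // h2.
    by have := Spos i ltac:(lia); rewrite hSi eqxx.
move=> he; have := hSe j ltac:(lia); rewrite he Slin0v tL; last by lia.
move/esym/eqP; rewrite mulf_eq0 !subr_eq0 !eqr_nat; lia.
Qed.


Lemma down_eq (f g : nat -> R) : (forall k, (n < k)%N -> f k = g k) ->
  (forall k, (0 < k <= n)%N -> f k - f k.+1 = g k - g k.+1) ->
  forall k, (0 < k)%N -> f k = g k.
Proof.
move=> hout hdf.
suff H : forall m k, (n < k + m)%N -> (0 < k)%N -> f k = g k by move=> k hk; apply: (H n.+1); lia.
elim=> [|m IH] k h1 h2; first by apply: hout; lia.
case: (ltnP n k) => h3; first exact: hout.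
have := hdf k ltac:(lia); rewrite (IH k.+1) ?addSn //.
move=> h; apply/eqP; rewrite -subr_eq0; apply/eqP.
have -> : f k - g k = (f k - g k.+1) - (g k - g k.+1) by ring.
  by rewrite h subrr.
lia.
Qed.

Lemma ab_det w w' : (forall j, (0 < j <= n)%N -> a w j = a w' j /\ b w j = b w' j) ->
  S w (d - 1) = 0 -> S w' (d - 1) = 0 -> w = w'.
Proof.
move=> hab hw hw'.
have hX : forall k, (0 < k)%N -> X w k = X w' k.
  apply: down_eq => [k hk|k hk]; first by rewrite !X_out.
  have [h _] := hab (d - 1 - k)%N ltac:(lia); move: h; rewrite /a.
  rewrite (_ : (d - 1 - (d - 1 - k) = k)%N); last by lia.
  by rewrite (_ : (d - (d - 1 - k) = k.+1)%N); last by lia.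
have hY : forall k, (0 < k)%N -> Y w k = Y w' k.
  apply: down_eq => [k hk|k hk]; first by rewrite !Y_out.
  by have [_ h] := hab k hk; move: h; rewrite /b.
have hZ : Z w = Z w'.
  move: hw hw'; rewrite /S /Cq subnn muln0 addr0 !Slin_end => h1 h2.
  have eX : \sum_(1 <= i < d - 1) X w i = \sum_(1 <= i < d - 1) X w' i.
    by apply: eq_big_nat => i hi; apply: hX; lia.
  have eY : \sum_(1 <= i < d - 1) Y w i = \sum_(1 <= i < d - 1) Y w' i.
    by apply: eq_big_nat => i hi; apply: hY; lia.
  move: h1; rewrite eX eY => h1.
  have : (d - 1)%:R * (Z w - Z w') = 0 :> R.
    rewrite mulrBr; lra.
  move/eqP; rewrite mulf_eq0 pnatr_eq0 subr_eq0 => /orP [h|/eqP ->] //; lia.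
apply: vec_eq; [move=> k hk; apply: hX; lia | move=> k hk; apply: hY; lia | exact: hZ].
Qed.

Section Vtx.
Variable c : nat -> nat.

Fixpoint Pf (j : nat) : nat :=
  if j is j'.+1 then (if (j' == 0%N) || (c j' != 0%N) then j' else Pf j') else 0%N.
Fixpoint Qaux (m : nat) : nat :=
  if m is m'.+1 then (if (m' == 0%N) || (c (d - 1 - m')%N != 0%N) then (d - 1 - m')%N else Qaux m')
  else (d - 1)%N.
Definition Qf j := Qaux (d - 1 - j).

Lemma Pf_lt j : (0 < j)%N -> (Pf j < j)%N.
Proof.
elim: j => [//|j IH] _ /=; case: ifP => // /norP [h _].
by apply: ltnW; apply: IH; lia.
Qed.

Lemma QfS j : (j < d - 1)%N ->
  Qf j = if (j.+1 == d - 1)%N || (c j.+1 != 0%N) then j.+1 else Qf j.+1.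
Proof.
move=> hj; rewrite /Qf (_ : (d - 1 - j = (d - 1 - j.+1).+1)%N); last by lia.
rewrite /= (_ : (d - 1 - (d - 1 - j.+1) = j.+1)%N); last by lia.
congr (if _ then _ else _); congr (_ || _).
by apply/eqP/eqP; lia.
Qed.

Lemma Qf_gt j : (j < d - 1)%N -> (j < Qf j <= d - 1)%N.
Proof.
move=> hj; move: {2}(d - 1 - j)%N (erefl (d - 1 - j)%N) => m.
elim: m j hj => [|m IH] j hj hm; first by lia.
rewrite (@QfS j hj); case: ifP => hc'; first by lia.
move/norP: hc' => [hc1 _].
have := IH j.+1 ltac:(lia) ltac:(lia); lia.
Qed.

Definition sT (i : nat) : R := if (0 < i <= n)%N && (c i == 0%N) then
  (i%:R - (Pf i)%:R) * ((Qf i)%:R - i%:R) else 0.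
Definition tT (j : nat) : R := 2%:R + sT j.+1 - 2%:R * sT j + sT j.-1.
Definition Av (j : nat) : R := if c j == 1%N then tT j else 0.
Definition Bv (j : nat) : R := if (c j != 0%N) && (c j != 1%N) then tT j else 0.
Definition vtxc := build Av Bv.

Lemma sT_ge0 i : 0 <= sT i.
Proof.
rewrite /sT; case: ifP => // /andP [hi _].
have h1 := @Pf_lt i ltac:(lia).
have h2 := @Qf_gt i ltac:(lia).
apply: mulr_ge0; rewrite subr_ge0 ler_nat; lia.
Qed.

Lemma sT_gt0 i : (0 < i <= n)%N -> c i = 0%N -> 0 < sT i.
Proof.
move=> hi hc; rewrite /sT hi hc eqxx /=.
have h1 := @Pf_lt i ltac:(lia).
have h2 := @Qf_gt i ltac:(lia).
apply: mulr_gt0; rewrite subr_gt0 ltr_nat; lia.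
Qed.

Lemma sT_rel k : (k.+1 <= n)%N -> c k.+1 = 0%N ->
  sT k.+2 - 2%:R * sT k.+1 + sT k = - 2%:R.
Proof.
move=> hk hc.
have hP := @Pf_lt k.+1 ltac:(lia).
have hQ := @Qf_gt k.+1 ltac:(lia).
have e0 : sT k.+1 = (k.+1%:R - (Pf k.+1)%:R) * ((Qf k.+1)%:R - k.+1%:R).
  by rewrite /sT hc eqxx andbT; have -> : (0 < k.+1 <= n)%N by lia.
have e1 : sT k.+2 = (k.+2%:R - (Pf k.+1)%:R) * ((Qf k.+1)%:R - k.+2%:R).
  have := @QfS k.+1 ltac:(lia); case: ifP => h.
    move=> ->; rewrite subrr mulr0 /sT.
    case: ifP => // /andP [h1 /eqP h2]; move: h; rewrite h2 /=; lia.
  move=> hQQ; rewrite /sT.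
  have -> : (0 < k.+2 <= n)%N && (c k.+2 == 0%N).
    by move: h => /norP [h1 /negbNE ->]; rewrite andbT; lia.
  have -> : Pf k.+2 = Pf k.+1 by rewrite [Pf k.+2]/= hc /=.
  by rewrite hQQ.
have e2 : sT k = (k%:R - (Pf k.+1)%:R) * ((Qf k.+1)%:R - k%:R).
  case: (boolP ((k == 0%N) || (c k != 0%N))) => h.
    have -> : Pf k.+1 = k by rewrite /= h.
    rewrite subrr mul0r /sT.
    case: ifP => // /andP [h1 /eqP h2]; move: h; rewrite h2 /=; lia.
  have hPj : Pf k.+1 = Pf k by rewrite /= (negbTE h).
  have hQj : Qf k = Qf k.+1.
    have := @QfS k ltac:(lia); rewrite hc /=.
    by have -> : (k.+1 == d - 1)%N = false by apply/negbTE; lia.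
  rewrite /sT; have -> : (0 < k <= n)%N && (c k == 0%N).
    by move: h => /norP [h1 /negbNE ->]; rewrite andbT; lia.
  by rewrite hPj hQj.
rewrite e0 e1 e2 -!natr1; ring.
Qed.

Lemma sT0 : sT 0 = 0. Proof. by rewrite /sT. Qed.
Lemma sTe : sT (d - 1) = 0.
Proof. by rewrite /sT; case: ifP => // /andP [h _]; lia. Qed.
Lemma sT_zero j : c j != 0%N -> sT j = 0.
Proof. by move=> h; rewrite /sT (negbTE h) andbF. Qed.
Lemma tT_ge2 j : (0 < j)%N -> c j != 0%N -> 2%:R <= tT j.
Proof.
move=> hj h; rewrite /tT (@sT_zero j h) mulr0 subr0.
have := sT_ge0 j.+1; have := sT_ge0 j.-1; lra.
Qed.

Lemma a_vtx j : (0 < j <= n)%N -> a vtxc j = Av j.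
Proof. exact: a_build. Qed.
Lemma b_vtx j : (0 < j <= n)%N -> b vtxc j = Bv j.
Proof. exact: b_build. Qed.

Lemma S_end v : S v (d - 1) = Slin v (d - 1).
Proof. by rewrite /S /Cq subnn muln0 addr0. Qed.

Lemma S_vtx i : (i <= d - 1)%N -> S vtxc i = sT i.
Proof.
apply: S_det.
- by rewrite S_end Slin_build_end.
- exact: sT0.
- exact: sTe.
- move=> k hk; rewrite a_vtx ?b_vtx; try lia.
  rewrite /Av /Bv; case: (eqVneq (c k.+1) 0%N) => h0.
    by rewrite ?h0 /= sT_rel // addr0 add0r.
  case: (eqVneq (c k.+1) 1%N) => h1.
    by rewrite ?h1 /= addr0 /tT /=; ring.
  by rewrite /= add0r /tT /=; ring.
Qed.

Lemma Pc_vtx : Pc vtxc.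
Proof.
split; last by rewrite S_vtx ?sTe.
move=> j hj; rewrite a_vtx ?b_vtx ?S_vtx //; try lia.
split; [|split]; last exact: sT_ge0.
  rewrite /Av; case: ifP => // /eqP h.
  have := @tT_ge2 j ltac:(lia) ltac:(by rewrite h); lra.
rewrite /Bv; case: ifP => // /andP [h _]; have := @tT_ge2 j ltac:(lia) h; lra.
Qed.

Definition pattern w := forall j, (0 < j <= n)%N ->
  (c j = 0%N -> a w j = 0 /\ b w j = 0) /\ (c j = 1%N -> S w j = 0 /\ b w j = 0) /\
  (c j != 0%N -> c j != 1%N -> S w j = 0 /\ a w j = 0).

Lemma vtx_uniq w : Pc w -> pattern w -> w = vtxc.
Proof.
move=> hP hpat.
have hS : forall i, (i <= d - 1)%N -> S w i = sT i.
  move=> i hi; apply/eqP; rewrite -subr_eq0; apply/eqP.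
  apply: (@dir_uniq (fun i => S w i - sT i)) => //.
  - by rewrite S0 sT0 subrr.
  - by rewrite hP.2 sTe subrr.
  - move=> k hk; have [h0 [h1 h2]] := hpat k.+1 ltac:(lia).
    case: (eqVneq (c k.+1) 0%N) => hc0.
      right; have [ha hb] := h0 hc0.
      have := @S2 w k hk; rewrite ha hb add0r => e1.
      have := @sT_rel k hk hc0 => e2.
      have -> : S w k.+2 - sT k.+2 - 2%:R * (S w k.+1 - sT k.+1) + (S w k - sT k) =
        (S w k.+2 - 2%:R * S w k.+1 + S w k) - (sT k.+2 - 2%:R * sT k.+1 + sT k) by ring.
      by rewrite e1 e2 add0r subrr.
    left; rewrite (@sT_zero k.+1 hc0) subr0.
    case: (eqVneq (c k.+1) 1%N) => hc1; first by case: (h1 hc1).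
    by case: (h2 hc0 hc1).
apply: ab_det; last by rewrite S_vtx ?sTe.
- move=> j hj; rewrite a_vtx // b_vtx //.
  have [h0 [h1 h2]] := hpat j hj.
  case: j hj h0 h1 h2 => [|k] hj h0 h1 h2; first by lia.
  have e := @S2 w k ltac:(lia).
  rewrite !hS in e; try lia.
  have et : tT k.+1 = sT k.+2 - 2%:R * sT k.+1 + sT k + 2%:R by rewrite /tT /=; ring.
  rewrite /Av /Bv; case: (eqVneq (c k.+1) 0%N) => hc0.
    by rewrite hc0 /=; case: (h0 hc0).
  case: (eqVneq (c k.+1) 1%N) => hc1.
    rewrite /=; have [_ hb] := h1 hc1; split => //.
    by rewrite et e hb; ring.
  rewrite /=; have [_ ha] := h2 hc0 hc1; split => //.
  by rewrite et e ha; ring.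
- exact: hP.2.
Qed.

Lemma vtx_pattern : pattern vtxc.
Proof.
move=> j hj; rewrite a_vtx // b_vtx // S_vtx; last by lia.
split; [|split].
- by move=> h; rewrite /Av /Bv h.
- by move=> h; rewrite /Bv h /= sT_zero ?h.
- by move=> h0 h1; rewrite /Av (negbTE h1) sT_zero.
Qed.

Lemma vtx_S_ne0 j : (0 < j <= n)%N -> c j = 0%N -> S vtxc j != 0.
Proof. by move=> hj h; rewrite S_vtx; [rewrite gt_eqF // sT_gt0 | lia]. Qed.

Lemma vtx_a_ne0 j : (0 < j <= n)%N -> c j = 1%N -> a vtxc j != 0.
Proof.
move=> hj h; rewrite a_vtx // /Av h /=.
have := @tT_ge2 j ltac:(lia) ltac:(by rewrite h) => h2.
rewrite gt_eqF //; lra.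
Qed.

End Vtx.

Lemma in_Pd_sum p q v : p + q = v + v -> forall j,
  a p j + a q j = a v j + a v j /\ b p j + b q j = b v j + b v j /\
  S p j + S q j = S v j + S v j.
Proof.
move=> e j.
have h : forall f : 'rV[R]_N -> nat -> R, (forall v t e j, f (v + t *: e) j = f v j + t * f e j) ->
   f p j + f q j = f v j + f v j.
  move=> f hf; have := hf p 1 q j; have := hf v 1 v j.
  by rewrite !scale1r !mul1r e => <- <-.
split; [exact: h aL | split; [exact: h bL|]].
have := h Slin SlinL; rewrite /S => hs; lra.
Qed.

Lemma extreme_vtx c : extreme (vtxc c).
Proof.
split; first by apply/in_PdE; apply: Pc_vtx.
move=> p q hp hq e.
have hpP := proj1 (in_PdE p) hp; have hqP := proj1 (in_PdE q) hq.
apply: vtx_uniq => // j hj.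
have [s1 [s2 s3]] := @in_Pd_sum p q (vtxc c) e j.
have [p1 [p2 p3]] := hpP.1 j hj; have [q1 [q2 q3]] := hqP.1 j hj.
have [v0 [v1 v2]] := @vtx_pattern c j hj.
split; [|split].
- by move=> h; have [h1 h2] := v0 h; move: s1 s2; rewrite h1 h2; lra.
- by move=> h; have [h1 h2] := v1 h; move: s3 s2; rewrite h1 h2; lra.
- by move=> h h'; have [h1 h2] := v2 h h'; move: s3 s1; rewrite h1 h2; lra.
Qed.

Definition pat v j : nat := if S v j != 0 then 0%N else if a v j != 0 then 1%N else 2%N.

Lemma extreme_pat v : extreme v -> v = vtxc (pat v).
Proof.
move=> hv; apply: vtx_uniq; first by apply/in_PdE; case: hv.
move=> j hj; rewrite /pat.
case: (eqVneq (S v j) 0) => hS /=.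
  case: (eqVneq (a v j) 0) => ha /=.
    by split; [|split].
  split; [|split] => // _; split => //.
  by case: (@ext_ab v j hv hj) => // h; rewrite h eqxx in ha.
split; [|split] => // _.
by case: (@ext_st v j hv hj) => // h'; rewrite h' eqxx in hS.
Qed.

Lemma vtx_ext c c' : (forall j, (0 < j <= n)%N -> c j = c' j) -> vtxc c = vtxc c'.
Proof.
move=> h; apply: vtx_uniq; first exact: Pc_vtx.
move=> j hj; rewrite -h //; exact: vtx_pattern.
Qed.

Lemma vtx_inj c c' : (forall j, (0 < j <= n)%N -> (c j <= 2)%N /\ (c' j <= 2)%N) ->
  vtxc c = vtxc c' -> forall j, (0 < j <= n)%N -> c j = c' j.
Proof.
move=> hr e j hj; have [h1 h2] := hr j hj.
have [p0 [p1 p2]] := @vtx_pattern c j hj; have [q0 [q1 q2]] := @vtx_pattern c' j hj.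
case: (eqVneq (c j) 0%N) => hc0.
  case: (eqVneq (c' j) 0%N) => hd0; first by rewrite hc0 hd0.
  have := @vtx_S_ne0 c j hj hc0; rewrite e.
  case: (eqVneq (c' j) 1%N) => hd1; first by rewrite (q1 hd1).1 eqxx.
  by rewrite (q2 hd0 hd1).1 eqxx.
case: (eqVneq (c j) 1%N) => hc1.
  case: (eqVneq (c' j) 0%N) => hd0.
    by have := @vtx_S_ne0 c' j hj hd0; rewrite -e (p1 hc1).1 eqxx.
  case: (eqVneq (c' j) 1%N) => hd1; first by rewrite hc1 hd1.
  by have := @vtx_a_ne0 c j hj hc1; rewrite e (q2 hd0 hd1).2 eqxx.
case: (eqVneq (c' j) 0%N) => hd0.
  by have := @vtx_S_ne0 c' j hj hd0; rewrite -e (p2 hc0 hc1).1 eqxx.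
case: (eqVneq (c' j) 1%N) => hd1.
  by have := @vtx_a_ne0 c' j hj hd1; rewrite -e (p2 hc0 hc1).2 eqxx.
lia.
Qed.

Lemma cons_mem c : c \in Pd_cons R d -> c \in Pd_ineqs R d \/ c = Pd_eq R d.
Proof. by rewrite /Pd_cons mem_cat mem_seq1 => /orP [h|/eqP h]; [left|right]. Qed.

Lemma linSub c p v : lin c (p - v) = lin c p - lin c v.
Proof. by rewrite -scaleN1r linL mulN1r. Qed.

Lemma vertex_extreme v : is_vertex_Pd v -> extreme v.
Proof.
case=> hv [I [hsz hI hfree]]; split => // p q hp hq e.
move: hfree; set M := (X in row_free X) => hfree.
have key : forall k : 'I_N, lin (nth (0, 0) (Pd_cons R d) (nth 0%N I k)).1 (p - v) = 0.
  move=> k; set c := nth (0, 0) (Pd_cons R d) (nth 0%N I k).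
  have hi : nth 0%N I k \in I by apply: mem_nth; rewrite hsz.
  have [hlt hc0] := hI _ hi.
  have hcm : c \in Pd_cons R d := mem_nth _ hlt.
  have h := congr1 (lin c.1) e; rewrite !linDr in h.
  have [hp0 hq0] : 0 <= cval c p /\ 0 <= cval c q.
    case: (@cons_mem c hcm) => [hc|->]; first by split; [apply: hp.1|apply: hq.1].
    by rewrite hp.2 hq.2.
  move: hc0 hp0 hq0; rewrite linSub !cvalE; lra.
have hM : M *m (p - v)^T = 0.
  apply/matrixP => k j0; rewrite !mxE -[RHS](key k) /lin; apply: eq_bigr => j _.
  by rewrite !mxE (ord1 j0).
have hu : M \in unitmx by rewrite -row_free_unit.
have : (p - v)^T = 0 by rewrite -(mulKmx hu (p - v)^T) hM mulmx0.
by move/(congr1 trmx); rewrite trmxK trmx0 => /eqP; rewrite subr_eq0 => /eqP.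
Qed.

Lemma extreme_vertex v : extreme v -> is_vertex_Pd v.
Proof.
move=> hext; have hv := hext.1; split => //.
set cons := Pd_cons R d.
pose L := [seq i <- iota 0 (size cons) | cval (nth (0, 0) cons i) v == 0].
pose A := \matrix_(k < size L, j < N) (nth (0, 0) cons (nth 0%N L k)).1 0 j.
have hL : forall c, c \in cons -> cval c v = 0 ->
    exists k : 'I_(size L), nth (0, 0) cons (nth 0%N L k) = c.
  move=> c hc hc0.
  have hiL : index c cons \in L.
    rewrite mem_filter nth_index // hc0 eqxx /= mem_iota add0n index_mem hc.
    by [].
  exists (Ordinal (etrans (index_mem _ _) hiL)) => /=.
  by rewrite nth_index // nth_index.
have hfull : row_full A.
  apply/negPn/negP => hnf.
  have hr : (\rank A < N)%N by rewrite ltn_neqAle hnf rank_leq_col.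
  set K := cokermx A.
  case: (boolP [exists j0 : 'I_N, (\row_i K i j0) != 0]) => [/existsP [j0 hj0]|/existsPn hall]; last first.
    have K0 : K = 0.
      apply/matrixP => i j; have := hall j; rewrite negbK => /eqP /rowP /(_ i).
      by rewrite !mxE.
    by have := mxrank_coker A; rewrite -/K K0 mxrank0; lia.
  pose e := \row_i K i j0.
  have hle : forall c, c \in cons -> cval c v = 0 -> lin c.1 e = 0.
    move=> c hc hc0; have [k <-] := hL c hc hc0.
    transitivity ((A *m K) k j0); last by rewrite mulmx_coker mxE.
    by rewrite mxE /lin; apply: eq_bigr => j _; rewrite !mxE.
  have [eps [heps H]] : exists eps, 0 < eps /\ forall p, p \in
      [seq (cval c v, lin c.1 e) | c <- Pd_ineqs R d] ->
      0 <= p.1 + eps * p.2 /\ 0 <= p.1 - eps * p.2.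
    apply: eps_list => p /mapP [c hc ->] /=; split; first exact: hv.1.
    by apply: hle; rewrite /cons /Pd_cons mem_cat hc.
  have heq : lin (Pd_eq R d).1 e = 0.
    by apply: hle; [rewrite /cons /Pd_cons mem_cat mem_seq1 eqxx orbT | exact: hv.2].
  have hin : forall t, t = eps \/ t = - eps -> in_Pd (v + t *: e).
    move=> t ht; split.
      move=> c hc; have [h1 h2] := H _ (map_f (fun c => (cval c v, lin c.1 e)) hc).
      rewrite cvalE linL.
      by case: ht => ->; move: h1 h2; rewrite /= cvalE; [|rewrite mulNr]; lra.
    by rewrite cvalE linL heq mulr0 addr0 -cvalE hv.2.
  have := hext.2 _ _ (hin eps (or_introl erefl)) (hin (- eps) (or_intror erefl)).
  rewrite addrACA -scalerDl subrr scale0r addr0 => /(_ erefl) /eqP.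
  rewrite -subr_eq0 addrAC subrr add0r scaler_eq0 (gt_eqF heps) /= => /eqP he.
  by rewrite -/e he eqxx in hj0.
pose f := fullrankfun hfull.
exists [seq nth 0%N L (f k) | k <- enum 'I_N]; split.
- by rewrite size_map size_enum_ord.
- move=> i /mapP [k _ ->].
  have : nth 0%N L (f k) \in L by apply: mem_nth.
  by rewrite mem_filter mem_iota add0n => /andP [/eqP h1 /andP [_ h2]].
- have -> : (\matrix_(k < N, j < N) (nth (0, 0) (Pd_cons R d)
      (nth 0%N [seq nth 0%N L (f k) | k <- enum 'I_N] k)).1 0 j) = rowsub f A.
    apply/matrixP => k j; rewrite !mxE (nth_map k); last by rewrite size_enum_ord.
    by rewrite nth_ord_enum.
  exact: fullrowsub_free.
Qed.

Definition isZ (r : R) := exists z : int, r = z%:~R.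
Lemma isZ_nat m : isZ m%:R. Proof. by exists m%:Z. Qed.
Lemma isZ_add x y : isZ x -> isZ y -> isZ (x + y).
Proof. by move=> [z1 ->] [z2 ->]; exists (z1 + z2); rewrite intrD. Qed.
Lemma isZ_opp x : isZ x -> isZ (- x).
Proof. by move=> [z1 ->]; exists (- z1); rewrite intrN. Qed.
Lemma isZ_sub x y : isZ x -> isZ y -> isZ (x - y).
Proof. by move=> hx hy; apply: isZ_add => //; apply: isZ_opp. Qed.
Lemma isZ_mul x y : isZ x -> isZ y -> isZ (x * y).
Proof. by move=> [z1 ->] [z2 ->]; exists (z1 * z2); rewrite intrM. Qed.
Lemma isZ0 : isZ 0. Proof. by exists 0. Qed.
Lemma isZ_sum m m' (F : nat -> R) : (forall i, isZ (F i)) -> isZ (\sum_(m <= i < m') F i).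
Proof.
move=> h; apply: (big_ind isZ) => //; [exact: isZ0 | exact: isZ_add].
Qed.

Lemma entry v (j : 'I_N) : (exists k, (0 < k <= n)%N /\ v 0 j = X v k) \/
  (exists k, (0 < k <= n)%N /\ v 0 j = Y v k) \/ v 0 j = Z v.
Proof.
have -> : v 0 j = co v j by rewrite (coE (ltn_ord j)); congr (v 0 _); apply: val_inj.
case: (ltnP j n) => h1.
  left; exists j.+1; split; first by lia.
  by rewrite /X; case: ifP => hh; [rewrite subn1 | lia].
case: (ltnP j (2 * d - 4)) => h2.
  right; left; exists (j - n).+1; split; first by lia.
  rewrite /Y; case: ifP => hh; last by lia.
  by rewrite (_ : (d - 2 + ((j - n).+1 - 1) = j)%N); last by lia.
right; right; have h3 : (j < 2 * d - 3)%N := ltn_ord j.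
have e : (nat_of_ord j = 2 * d - 4)%N by lia.
by rewrite /Z e.
Qed.

Lemma Z_from_S1 v : Z v = S v 1 + Y v 1 - Cq 1.
Proof. by rewrite /S /Slin subnn big_geq // big_nat1 mul1r; ring. Qed.

Lemma vtx_int c (j : 'I_N) : isZ ((vtxc c) 0 j).
Proof.
have hsT : forall i, isZ (sT c i).
  move=> i; rewrite /sT; case: ifP => _; last exact: isZ0.
  by apply: isZ_mul; apply: isZ_sub; apply: isZ_nat.
have htT : forall i, isZ (tT c i).
  move=> i; rewrite /tT; apply: isZ_add; [apply: isZ_sub; [apply: isZ_add|apply: isZ_mul]|] => //;
    exact: isZ_nat.
have hA : forall i, isZ (Av c i) by move=> i; rewrite /Av; case: ifP => _ //; exact: isZ0.
have hB : forall i, isZ (Bv c i) by move=> i; rewrite /Bv; case: ifP => _ //; exact: isZ0.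
have hX : forall k, isZ (X (vtxc c) k).
  move=> k; case: k => [|k]; first by rewrite /X /=; exact: isZ0.
  by rewrite X_build //; apply: isZ_sum.
have hY : forall k, isZ (Y (vtxc c) k).
  move=> k; case: k => [|k]; first by rewrite /Y /=; exact: isZ0.
  by rewrite Y_build //; apply: isZ_sum.
case: (entry (vtxc c) j) => [[k [_ ->]]|[[k [_ ->]]|->]] //.
rewrite Z_from_S1 S_vtx; last by lia.
by apply: isZ_sub; [apply: isZ_add|apply: isZ_nat].
Qed.

Lemma v_build v : Pc v -> v = build (a v) (b v).
Proof.
move=> hP; apply: ab_det.
- by move=> j hj; rewrite a_build // b_build.
- exact: hP.2.
- by rewrite S_end Slin_build_end.
Qed.

Lemma sum_tel (f : nat -> R) m : \sum_(0 <= k < m) (f k.+2 - 2%:R * f k.+1 + f k) =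
  (f m.+1 - f m) - (f 1%N - f 0%N).
Proof.
elim: m => [|m IH]; first by rewrite big_geq // subrr.
by rewrite big_nat_recr //= IH; ring.
Qed.

Lemma ab_sum v : Pc v -> \sum_(0 <= k < n) (a v k.+1 + b v k.+1) = (2 * n)%:R - S v n - S v 1.
Proof.
move=> hP.
rewrite (eq_big_nat _ _ (F2 := fun k => (S v k.+2 - 2%:R * S v k.+1 + S v k) + 2%:R)); last first.
  by move=> k hk; rewrite S2; [ring | lia].
rewrite big_split /= sum_tel sumr_const_nat subn0 S0.
rewrite (_ : n.+1 = d - 1)%N; last by lia.
by rewrite hP.2 natrM -mulr_natl mulr1; ring.
Qed.

Lemma le_sum_term (F : nat -> R) m j : (forall k, (k < m)%N -> 0 <= F k) -> (j < m)%N ->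
  F j <= \sum_(0 <= k < m) F k.
Proof.
elim: m => [//|m IH] h hj; rewrite big_nat_recr //=.
case: (ltnP j m) => h1.
  have := IH (fun k hk => h k ltac:(lia)) h1; have := h m ltac:(lia); lra.
have -> : j = m by lia.
have : 0 <= \sum_(0 <= k < m) F k.
  by rewrite big_nat_cond; apply: sumr_ge0 => k /andP [/andP [_ hk] _]; apply: h; lia.
lra.
Qed.

Lemma ab_bnd v j : Pc v -> (0 < j <= n)%N -> a v j <= (2 * d)%:R /\ b v j <= (2 * d)%:R.
Proof.
move=> hP hj.
have hs := @ab_sum v hP.
have h0 : forall k, (k < n)%N -> 0 <= a v k.+1 + b v k.+1.
  by move=> k hk; have [h1 [h2 _]] := hP.1 k.+1 ltac:(lia); lra.
have := @le_sum_term (fun k => a v k.+1 + b v k.+1) n j.-1 h0 ltac:(lia).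
rewrite prednK; last by lia.
have [h1 [h2 _]] := hP.1 j hj.
have h3 : 0 <= S v n by have [_ [_ ]] := hP.1 n ltac:(lia).
have h4 : 0 <= S v 1 by have [_ [_ ]] := hP.1 1%N ltac:(lia).
have h5 : (2 * n)%:R <= (2 * d)%:R :> R by rewrite ler_nat; lia.
lra.
Qed.

Lemma sum_bnd m m' (F : nat -> R) B : (forall i, (m <= i < m')%N -> 0 <= F i <= B) ->
  0 <= \sum_(m <= i < m') F i <= (m' - m)%:R * B.
Proof.
move=> h; apply/andP; split.
  rewrite big_nat_cond; apply: sumr_ge0 => i /andP [hi _].
  by have /andP [] := h i hi.
rewrite mulr_natl -sumr_const_nat big_nat_cond [X in _ <= X]big_nat_cond.
by apply: ler_sum => i /andP [hi _]; have /andP [] := h i hi.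
Qed.

Lemma bounded v (j : 'I_N) : in_Pd v -> `|v 0 j| <= (5 * d * d)%:R.
Proof.
move=> /in_PdE hP.
have hv := @v_build v hP.
have hB : forall i, (0 < i <= n)%N -> 0 <= a v i <= (2 * d)%:R /\ 0 <= b v i <= (2 * d)%:R.
  move=> i hi; have [h1 [h2 _]] := hP.1 i hi; have [h3 h4] := @ab_bnd v i hP hi.
  by rewrite h1 h2 h3 h4.
have hX : forall k, (0 < k <= n)%N -> 0 <= X v k <= (d * (2 * d))%:R.
  move=> k hk; rewrite hv X_build; last by lia.
  have hh : forall i, (k <= i < d - 1)%N -> 0 <= a v (d - 1 - i) <= (2 * d)%:R.
    by move=> i hi; have [] := hB (d - 1 - i)%N ltac:(lia).
  have /andP [h1 h2] := @sum_bnd k (d - 1)%N (fun i => a v (d - 1 - i)) (2 * d)%:R hh.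
  rewrite /Xb h1 /=; apply: le_trans h2 _.
  rewrite -natrM ler_nat; apply: leq_mul => //; lia.
have hY : forall k, (0 < k <= n)%N -> 0 <= Y v k <= (d * (2 * d))%:R.
  move=> k hk; rewrite hv Y_build; last by lia.
  have hh : forall i, (k <= i < d - 1)%N -> 0 <= b v i <= (2 * d)%:R.
    by move=> i hi; have [] := hB i ltac:(lia).
  have /andP [h1 h2] := @sum_bnd k (d - 1)%N (fun i => b v i) (2 * d)%:R hh.
  rewrite /Yb h1 /=; apply: le_trans h2 _.
  rewrite -natrM ler_nat; apply: leq_mul => //; lia.
have hM1 : (d * (2 * d))%:R <= (5 * d * d)%:R :> R by rewrite ler_nat; nia.
rewrite ler_norml.
case: (entry v j) => [[k [hk ->]]|[[k [hk ->]]|->]].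
- have /andP [h1 h2] := hX k hk; apply/andP; split; lra.
- have /andP [h1 h2] := hY k hk; apply/andP; split; lra.
rewrite Z_from_S1 /Cq.
have /andP [h1 h2] := hY 1%N ltac:(lia).
have h3 : 0 <= S v 1 by have [_ [_ ]] := hP.1 1%N ltac:(lia).
have h4 : S v 1 <= (2 * d)%:R.
  have hs := @ab_sum v hP.
  have h5 : 0 <= S v n by have [_ [_ ]] := hP.1 n ltac:(lia).
  have h6 : 0 <= \sum_(0 <= k < n) (a v k.+1 + b v k.+1).
    rewrite big_nat_cond; apply: sumr_ge0 => k /andP [hk _].
    by have [h7 [h8 _]] := hP.1 k.+1 ltac:(lia); lra.
  have h7 : (2 * n)%:R <= (2 * d)%:R :> R by rewrite ler_nat; lia.
  lra.
have h8 : (1 * (d - 1 - 1))%:R <= (5 * d * d)%:R :> R by rewrite ler_nat; nia.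
have h9 : (2 * d)%:R + (d * (2 * d))%:R <= (5 * d * d)%:R :> R by rewrite -natrD ler_nat; nia.
have h10 : 0 <= (1 * (d - 1 - 1))%:R :> R by [].
apply/andP; split; lra.
Qed.

End Poly.

Definition c_of (d : nat) (s : (d - 2).-tuple 'I_3) (j : nat) : nat :=
  if (0 < j <= d - 2)%N then nat_of_ord (nth ord0 s j.-1) else 0%N.

Theorem theorem5p20 (R : realFieldType) (d : nat) (hd : (3 <= d)%N) :
  (* P_d is bounded (a polytope) *)
  (exists M : R, forall v : 'rV[R]_(Pdim d), in_Pd v ->
       forall j, `|v 0 j| <= M)
  (* all vertices are integral *)
  /\ (forall v : 'rV[R]_(Pdim d), is_vertex_Pd v ->
        forall j, exists z : int, v 0 j = z%:~R)
  (* exactly 3^(d-2) vertices *)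
  /\ (exists V : seq 'rV[R]_(Pdim d),
        [/\ uniq V, size V = (3 ^ (d - 2))%N &
            forall v, v \in V <-> is_vertex_Pd v]).
Proof.
split; [|split].
- exists (5 * d * d)%:R => v hv j; exact: (@bounded R d hd).
- move=> v hv j.
  have he := @vertex_extreme R d v hv.
  rewrite (@extreme_pat R d hd v he); exact: (@vtx_int R d hd).
exists [seq vtxc R d (@c_of d s) | s <- enum {: (d - 2).-tuple 'I_3}]; split.
- rewrite map_inj_uniq ?enum_uniq // => s t e.
  have hc := @vtx_inj R d hd (@c_of d s) (@c_of d t).
  apply: val_inj; apply: (@eq_from_nth _ ord0); first by rewrite !size_tuple.
  move=> i; rewrite size_tuple => hi.
  have hr : forall j, (0 < j <= d - 2)%N -> (@c_of d s j <= 2)%N /\ (@c_of d t j <= 2)%N.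
    by move=> j hj; rewrite /c_of hj; split; rewrite -ltnS; exact: ltn_ord.
  have := hc hr e i.+1 ltac:(lia).
  rewrite /c_of; have -> : (0 < i.+1 <= d - 2)%N by lia.
  by move=> /= h; apply: val_inj.
- by rewrite size_map -cardE card_tuple card_ord.
move=> v; split.
  by move=> /mapP [s _ ->]; apply: (@extreme_vertex R d hd); apply: (@extreme_vtx R d hd).
move=> hv; have he := @vertex_extreme R d v hv.
have hs : size (mkseq (fun i => (inord (@pat R d v i.+1) : 'I_3)) (d - 2)) == (d - 2)%N
  by rewrite size_mkseq.
pose s : (d - 2).-tuple 'I_3 := Tuple hs.
apply/mapP; exists s; first by rewrite mem_enum.
rewrite {1}(@extreme_pat R d hd v he); apply: (@vtx_ext R d hd) => j hj.
rewrite /c_of hj /s /= nth_mkseq; last by lia.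
rewrite prednK; last by lia.
rewrite inordK // /pat; case: ifP => _ //; case: ifP => _ //.
Qed.
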